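(* For $a\in\{1,\dots,n\}$ let $z_a = q\omega_a - (q-1)\psi_a\psi_a^*\omega_a^{k+1}\in\mathrm{Cl}_q(n,k)$. Then each $z_a$ is central in $\mathrm{Cl}_q(n,k)$, and for every positive integer $r$, \[ z_a^r = q^r\omega_a^r - (q^r-1)\psi_a\psi_a^*\omega_a^{k+r}. \] In particular $z_a^k=\psi_a\psi_a^*+\psi_a^*\psi_a$, so $z_a^{2k}=1$.
   Context: Let $\mathbb{k}$ be a field of characteristic different from $2$, let $q\in\mathbb{k}^\times$, and let $n,k$ be positive integers. The quantum Clifford algebra $\mathrm{Cl}_q(n,k)$ is the unital associative $\mathbb{k}$-algebra generated by $\psi_a,\psi_a^*,\omega_a,\omega_a^{-1}$ for $a\in\{1,\dots,n\}$, subject to the relations (for all $a,b\in\{1,\dots,n\}$): $\omega_a\omega_b=\omega_b\omega_a$; $\omega_a\omega_a^{-1}=1$; $\omega_a\psi_b=q^{\delta_{ab}}\psi_b\omega_a$; $\omega_a\psi_b^*=q^{-\delta_{ab}}\psi_b^*\omega_a$; $\psi_a\psi_b+\psi_b\psi_a=0$; $\psi_a^*\psi_b^*+\psi_b^*\psi_a^*=0$; $\psi_a\psi_a^*+q^k\psi_a^*\psi_a=\omega_a^{-k}$; $\psi_a\psi_a^*+q^{-k}\psi_a^*\psi_a=\omega_a^{k}$; and $\psi_a\psi_b^*+\psi_b^*\psi_a=0$ if $a\neq b$. *)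

(* Defs.v *)
From HB Require Import structures.
From mathcomp Require Import all_boot all_order all_algebra.
Set Implicit Arguments. Unset Strict Implicit. Unset Printing Implicit Defensive.
Import GRing.Theory.
Local Open Scope ring_scope.

(* The quantum Clifford algebra Cl_q(n,k) is presented by generators and
   relations.  We encode it through its universal property: a family of
   elements psi a, psis a (= psi_a star), om a (= omega_a), omi a (= omega_a^{-1})
   of an F-algebra A satisfying the defining relations, with A generated
   (as a unital F-algebra) by these elements. *)

Definition qdelta (F : fieldType) (n : nat) (q : F) (a b : 'I_n) : F :=
  if a == b then q else 1.

Definition clq_relations (F : fieldType) (A : algType F) (n k : nat) (q : F)
  (psi psis om omi : 'I_n -> A) : Prop :=
     (forall a b, om a * om b = om b * om a)
  /\ (forall a, om a * omi a = 1)
  /\ (forall a b, om a * psi b = qdelta q a b *: (psi b * om a))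
  /\ (forall a b, om a * psis b = qdelta q^-1 a b *: (psis b * om a))
  /\ (forall a b, psi a * psi b + psi b * psi a = 0)
  /\ (forall a b, psis a * psis b + psis b * psis a = 0)
  /\ (forall a, psi a * psis a + q ^+ k *: (psis a * psi a) = omi a ^+ k)
  /\ (forall a, psi a * psis a + q ^- k *: (psis a * psi a) = om a ^+ k)
  /\ (forall a b, a != b -> psi a * psis b + psis b * psi a = 0).

Definition in_generated_subalg (F : fieldType) (A : algType F)
  (S : A -> Prop) (x : A) : Prop :=
  forall P : A -> Prop,
    P 1 -> (forall y, S y -> P y) ->
    (forall y z, P y -> P z -> P (y + z)) ->
    (forall y z, P y -> P z -> P (y * z)) ->
    (forall (c : F) y, P y -> P (c *: y)) ->
    P x.

Definition clq_generators (n : nat) (A : Type) (psi psis om omi : 'I_n -> A)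
  (x : A) : Prop :=
  exists a, x = psi a \/ x = psis a \/ x = om a \/ x = omi a.

Definition zelt (F : fieldType) (A : algType F) (n k : nat) (q : F)
  (psi psis om : 'I_n -> A) (a : 'I_n) : A :=
  q *: om a - (q - 1) *: (psi a * psis a * om a ^+ k.+1).

(* Main.v *)
From HB Require Import structures.
From mathcomp Require Import all_boot all_order all_algebra.
From mathcomp Require Import ring zify.
Require Import Defs.
Set Implicit Arguments.
Import GRing.Theory.
Local Open Scope ring_scope.

Lemma two_ne0 (F : fieldType) : (2 \notin [pchar F])%N -> (2%:R : F) != 0.
Proof. by rewrite inE /=. Qed.

Lemma sq0 (F : fieldType) (A : algType F) (x : A) : (2%:R : F) != 0 -> x * x + x * x = 0 -> x * x = 0.
Proof.
move=> h2 h; rewrite -(scalerK h2 (x * x)) -[2%:R]/(1 + 1) scalerDl scale1r h scaler0 //.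
Qed.

Section S.
Variables (F : fieldType) (A : algType F) (q : F) (k : nat) (w wi p s : A).
Hypotheses (q0 : q != 0)
 (wp : w * p = q *: (p * w)) (ws : w * s = q^-1 *: (s * w))
 (pp : p * p = 0) (ss : s * s = 0)
 (R1 : p * s + q ^+ k *: (s * p) = wi ^+ k)
 (R2 : p * s + q ^- k *: (s * p) = w ^+ k)
 (wwi : w * wi = 1).

Lemma wnp n : w ^+ n * p = q ^+ n *: (p * w ^+ n).
Proof.
elim: n => [|n IH]; first by rewrite !expr0 mul1r mulr1 scale1r.
by rewrite exprS -mulrA IH -scalerAr [w * (p * _)]mulrA wp -scalerAl scalerA -exprSr mulrA.
Qed.

Lemma wns n : w ^+ n * s = q^-1 ^+ n *: (s * w ^+ n).
Proof.
elim: n => [|n IH]; first by rewrite !expr0 mul1r mulr1 scale1r.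
by rewrite exprS -mulrA IH -scalerAr [w * (s * _)]mulrA ws -scalerAl scalerA -exprSr mulrA.
Qed.

Lemma we : GRing.comm w (p * s).
Proof.
rewrite /GRing.comm mulrA wp -scalerAl -[p * w * s]mulrA ws -scalerAr scalerA mulfV // scale1r mulrA //.
Qed.

Lemma wf : GRing.comm w (s * p).
Proof.
rewrite /GRing.comm mulrA ws -scalerAl -[s * w * p]mulrA wp -scalerAr scalerA mulVf // scale1r mulrA //.
Qed.

Lemma wki n : w ^+ n * wi ^+ n = 1.
Proof.
elim: n => [|n IH]; first by rewrite !expr0 mul1r.
by rewrite exprSr exprS mulrA -(mulrA _ w) wwi mulr1.
Qed.

Lemma ikw : wi ^+ k * w ^+ k = 1.
Proof.
have c : GRing.comm (w ^+ k) (wi ^+ k).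
  apply/commr_sym; apply: commrX; rewrite -R1; apply/commr_sym; apply: commrD; first exact: we.
  rewrite /GRing.comm -scalerAr -scalerAl; congr (_ *: _); exact: wf.
by rewrite -c wki.
Qed.

Lemma wiw : (0 < k)%N -> wi * w = 1.
Proof.
case: k ikw => // k' h _.
have ew : wi = wi ^+ k'.+1 * w ^+ k'.
  by rewrite -{1}[wi]mul1r -h (exprSr w) !mulrA -(mulrA _ w wi) wwi mulr1.
by rewrite ew -mulrA -(exprSr w) h.
Qed.


Lemma sps : s * p * s = s * w ^+ k.
Proof.
by rewrite -R2 mulrDr -scalerAr [s * (s * p)]mulrA ss mul0r scaler0 addr0 mulrA.
Qed.

Lemma sps' : s * p * s = s * wi ^+ k.
Proof.
by rewrite -R1 mulrDr -scalerAr [s * (s * p)]mulrA ss mul0r scaler0 addr0 mulrA.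
Qed.

Lemma psp' : p * s * p = q ^- k *: (p * wi ^+ k).
Proof.
rewrite -R1 mulrDr [p * (p * s)]mulrA pp mul0r add0r -scalerAr scalerA mulVf ?scale1r ?mulrA //.
by rewrite expf_neq0.
Qed.

Lemma pspw : p * s * p * w ^+ k = q ^- k *: p.
Proof. by rewrite psp' -scalerAl -mulrA ikw mulr1. Qed.

Lemma ee : p * s * (p * s) = p * s * w ^+ k.
Proof. by rewrite -mulrA [s * (p * s)]mulrA sps mulrA. Qed.

Lemma ee' : p * s * (p * s) = p * s * wi ^+ k.
Proof. by rewrite -mulrA [s * (p * s)]mulrA sps' mulrA. Qed.

Lemma e2k N : p * s * w ^+ (2 * k + N) = p * s * w ^+ N.
Proof.
by rewrite exprD mul2n -addnn exprD !mulrA -ee ee' -(mulrA _ (wi ^+ k)) ikw mulr1.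
Qed.

Lemma ewn n : GRing.comm (p * s) (w ^+ n).
Proof. apply: commrX; apply/commr_sym; exact: we. Qed.

Lemma eWeW m n : p * s * w ^+ m * (p * s * w ^+ n) = p * s * w ^+ (k + m + n).
Proof.
by rewrite mulrA -(mulrA _ (w ^+ m)) -ewn mulrA ee -!mulrA -!exprD addnA.
Qed.


Lemma zpow r : (q *: w - (q - 1) *: (p * s * w ^+ k.+1)) ^+ r.+1
  = q ^+ r.+1 *: w ^+ r.+1 - (q ^+ r.+1 - 1) *: (p * s * w ^+ (k + r.+1)).
Proof.
elim: r => [|r IH]; first by rewrite !expr1 addn1.
rewrite exprSr IH mulrBl !mulrBr -!scalerAl -!scalerAr !scalerA.
have T1 : w ^+ r.+1 * w = w ^+ r.+2 by rewrite -exprSr.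
have T2 : w ^+ r.+1 * (p * s * w ^+ k.+1) = p * s * w ^+ (k + r.+2).
  rewrite mulrA -ewn -mulrA -exprD; congr (_ * w ^+ _); lia.
have T3 : p * s * w ^+ (k + r.+1) * w = p * s * w ^+ (k + r.+2).
  by rewrite -(mulrA _ (w ^+ _) w) -exprSr !addnS.
have T4 : p * s * w ^+ (k + r.+1) * (p * s * w ^+ k.+1) = p * s * w ^+ (k + r.+2).
  by rewrite eWeW -(e2k (k + r.+2)); congr (_ * w ^+ _); lia.
rewrite T1 T2 T3 T4 -scalerBl -addrA -opprD -scalerDl.
congr (_ *: _ - _ *: _); rewrite !exprSr; ring.
Qed.


Lemma zp : p * (q *: w - (q - 1) *: (p * s * w ^+ k.+1))
   = (q *: w - (q - 1) *: (p * s * w ^+ k.+1)) * p.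
Proof.
rewrite mulrBr mulrBl -!scalerAr -!scalerAl !mulrA pp !mul0r scaler0 subr0.
rewrite wp -!mulrA wnp -!scalerAr !mulrA.
have -> : p * s * p * w ^+ k.+1 = q ^- k *: (p * w).
  by rewrite exprSr mulrA pspw -scalerAl.
rewrite !scalerA -scalerBl; congr (_ *: _).
rewrite exprS; field; by rewrite expf_neq0.
Qed.

Lemma zs : s * (q *: w - (q - 1) *: (p * s * w ^+ k.+1))
   = (q *: w - (q - 1) *: (p * s * w ^+ k.+1)) * s.
Proof.
rewrite mulrBr mulrBl -!scalerAr -!scalerAl !mulrA sps' ws.
rewrite -!mulrA wns -!scalerAr [s * (s * _)]mulrA ss mul0r mulr0 !scaler0 subr0.
rewrite exprSr [wi ^+ k * _]mulrA ikw mul1r.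
rewrite scalerA mulfV // scale1r -scalerBl (_ : q - (q - 1) = 1) ?scale1r //; ring.
Qed.

Lemma zk : (0 < k)%N -> (q *: w - (q - 1) *: (p * s * w ^+ k.+1)) ^+ k = p * s + s * p.
Proof.
move=> k0; have := zpow k.-1; rewrite prednK // => ->.
rewrite (_ : (k + k = 2 * k + 0)%N); last by lia.
rewrite e2k expr0 mulr1.
have -> : s * p = q ^+ k *: w ^+ k - q ^+ k *: (p * s).
  rewrite -R2 scalerDr scalerA mulfV ?expf_neq0 // scale1r.
  by rewrite [q ^+ k *: _ + _]addrC addrK.
by rewrite scalerBl scale1r opprB addrCA.
Qed.

Lemma ef : p * s * (s * p) = 0.
Proof. by rewrite -mulrA [s * (s * p)]mulrA ss mul0r mulr0. Qed.

Lemma fe : s * p * (p * s) = 0.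
Proof. by rewrite -mulrA [p * (p * s)]mulrA pp mul0r mulr0. Qed.

Lemma one_ef : 1 = p * s * (p * s) + s * p * (s * p).
Proof.
rewrite -(wki k) -R1 -R2 mulrDl !mulrDr -!scalerAl -!scalerAr ef fe !scaler0 addr0 add0r.
by rewrite scalerA mulVf ?expf_neq0 // scale1r.
Qed.

Lemma z2k : (0 < k)%N -> (q *: w - (q - 1) *: (p * s * w ^+ k.+1)) ^+ (2 * k) = 1.
Proof.
move=> k0; rewrite mulnC exprM zk // expr2 mulrDl !mulrDr ef fe addr0 add0r.
by rewrite -one_ef.
Qed.


End S.

Lemma zcomm (F : fieldType) (A : algType F) (q : F) (k : nat) (w p s x : A) :
  GRing.comm x w -> GRing.comm x (p * s) ->
  GRing.comm x (q *: w - (q - 1) *: (p * s * w ^+ k.+1)).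
Proof.
move=> hw he; apply: commrB; rewrite /GRing.comm -scalerAr -scalerAl; congr (_ *: _) => //.
by apply: commrM => //; apply: commrX.
Qed.

Theorem lemma3p13 (F : fieldType) (A : algType F) (n k : nat) (q : F)
  (psi psis om omi : 'I_n -> A) :
  (2 \notin [pchar F])%N -> q != 0 -> (0 < n)%N -> (0 < k)%N ->
  clq_relations k q psi psis om omi ->
  (forall x : A, in_generated_subalg (clq_generators psi psis om omi) x) ->
  forall a : 'I_n,
    [/\ (forall x : A, zelt k q psi psis om a * x = x * zelt k q psi psis om a),
        (forall r : nat, (0 < r)%N ->
           zelt k q psi psis om a ^+ r
           = q ^+ r *: om a ^+ r - (q ^+ r - 1) *: (psi a * psis a * om a ^+ (k + r))),
        zelt k q psi psis om a ^+ k = psi a * psis a + psis a * psi a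
      & zelt k q psi psis om a ^+ (2 * k) = 1].
Proof.
move=> h2 q0 n0 k0 rel gen a.
case: rel => Hc [Hwi [Hwp [Hws [Hpp [Hss [HR1 [HR2 Hab]]]]]]].
have wpa b : om b * psi b = q *: (psi b * om b) by rewrite Hwp /qdelta eqxx.
have wsa b : om b * psis b = q^-1 *: (psis b * om b) by rewrite Hws /qdelta eqxx.
have ppa b : psi b * psi b = 0 := @sq0 F A _ (@two_ne0 F h2) (Hpp b b).
have ssa b : psis b * psis b = 0 := @sq0 F A _ (@two_ne0 F h2) (Hss b b).
rewrite /zelt.
set Z := q *: om a - _.
have Com b : GRing.comm (om b) Z.
  apply: zcomm; first exact: Hc.
  case: (eqVneq b a) => [->|hba]; first exact: (@we _ _ _ _ _ _ q0 (wpa a) (wsa a)).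
  apply: commrM.
    by rewrite /GRing.comm Hwp /qdelta (negbTE hba) scale1r.
  by rewrite /GRing.comm Hws /qdelta (negbTE hba) scale1r.
have Cgen x : clq_generators psi psis om omi x -> GRing.comm x Z.
  case=> b [->|[->|[->|->]]].
  - case: (eqVneq b a) => [->|hba]; first exact: (@zp _ _ _ _ _ _ _ _ q0 (wpa a) (wsa a) (ppa a) (HR1 a) (Hwi a)).
    apply: zcomm.
      by rewrite /GRing.comm Hwp /qdelta eq_sym (negbTE hba) scale1r.
    have h1 : psi b * psi a = - (psi a * psi b).
      by apply/eqP; rewrite -addr_eq0 addrC Hpp.
    have h3 : psi b * psis a = - (psis a * psi b).
      by apply/eqP; rewrite -addr_eq0 Hab.
    by rewrite /GRing.comm mulrA h1 mulNr -(mulrA (psi a) (psi b)) h3 mulrN opprK mulrA.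
  - case: (eqVneq b a) => [->|hba]; first exact: (@zs _ _ _ _ _ _ _ _ q0 (wpa a) (wsa a) (ssa a) (HR1 a) (Hwi a)).
    apply: zcomm.
      by rewrite /GRing.comm Hws /qdelta eq_sym (negbTE hba) scale1r.
    have h1 : psis b * psi a = - (psi a * psis b).
      by apply/eqP; rewrite -addr_eq0 addrC Hab // eq_sym.
    have h3 : psis b * psis a = - (psis a * psis b).
      by apply/eqP; rewrite -addr_eq0 addrC Hss.
    by rewrite /GRing.comm mulrA h1 mulNr -(mulrA (psi a) (psis b)) h3 mulrN opprK mulrA.
  - exact: Com.
  - have iw := @wiw _ _ _ _ _ _ _ _ q0 (wpa b) (wsa b) (HR1 b) (Hwi b) k0.
    rewrite /GRing.comm -{1}(mulr1 (omi b * Z)) -(Hwi b) mulrA -(mulrA (omi b) Z) -Com.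
    by rewrite mulrA iw mul1r.
split.
- clearbody Z; move=> x; apply: (gen x (fun y => Z * y = y * Z)).
  + by rewrite mulr1 mul1r.
  + by move=> y /Cgen; rewrite /GRing.comm => ->.
  + by move=> y z' /= h h'; rewrite /= mulrDr mulrDl h h'.
  + by move=> y z' /= h h'; rewrite /= mulrA h -(mulrA y Z z') h' mulrA.
  + by move=> c y /= h; rewrite /= -scalerAl -h scalerAr.
- rewrite /Z; by case=> // r _; exact: (@zpow _ _ _ _ _ _ _ _ q0 (wpa a) (wsa a) (ssa a) (HR1 a) (HR2 a) (Hwi a)).
- rewrite /Z; exact: (@zk _ _ _ _ _ _ _ _ q0 (wpa a) (wsa a) (ssa a) (HR1 a) (HR2 a) (Hwi a)).
- rewrite /Z; exact: (@z2k _ _ _ _ _ _ _ _ q0 (wpa a) (wsa a) (ppa a) (ssa a) (HR1 a) (HR2 a) (Hwi a)).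
Qed.
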